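(* Let $n$ be a positive integer and let $p>n+1$ be a prime. (i) If $n$ is odd, then $$\sum_{\substack{0<i_1<\cdots<i_n<p\\ i_1\equiv 1,2\ (\mathrm{mod}\ 6)}}\frac{1}{i_1\cdots i_n}\equiv \sum_{\substack{0<i_1<\cdots<i_n<p\\ i_1\equiv 4,5\ (\mathrm{mod}\ 6)}}\frac{1}{i_1\cdots i_n}\pmod p.$$ (ii) If $n$ is even, then $$\sum_{\substack{0<i_1<\cdots<i_n<p\\ i_1\equiv 0\ (\mathrm{mod}\ 3)}}\frac{(-1)^{i_1}}{i_1\cdots i_n}\equiv 2\sum_{\substack{0<i_1<\cdots<i_n<p\\ i_1\equiv 2,3,4\ (\mathrm{mod}\ 6)}}\frac{1}{i_1\cdots i_n}\pmod p.$$
   Context: All sums range over integers $i_1,\dots,i_n$. The summands are rational numbers whose denominators are not divisible by $p$; for such rationals $a,b$, $a\equiv b \pmod p$ means that $a-b$ lies in $p\mathbb{Z}_{(p)}$ (equivalently, $a-b$ is divisible by $p$ in the ring $\mathbb{Z}_p$ of $p$-adic integers). *)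

(* Defs.v *)
From mathcomp Require Import all_boot all_order all_algebra.
Set Implicit Arguments. Unset Strict Implicit. Unset Printing Implicit Defensive.
Import Order.TTheory GRing.Theory Num.Theory.
Local Open Scope ring_scope.

(* Congruence modulo a prime p of rationals: a = b (mod p) iff a - b lies in
   p Z_(p), i.e. p divides the numerator of the reduced fraction a - b. *)
Definition ratcong (p : nat) (a b : rat) : Prop :=
  (p%:Z %| numq (a - b))%Z.

Definition incr_tuple (n p : nat) (t : n.-tuple 'I_p) : bool :=
  sorted ltn (map val t) && all (fun i : 'I_p => 0 < val i)%N t.

Definition fst_idx (n p : nat) (t : n.-tuple 'I_p) : nat := nth 0%N (map val t) 0.

Definition prod_idx (n p : nat) (t : n.-tuple 'I_p) : rat :=
  \prod_(i <- t) ((val i)%:R : rat).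

Definition mhsum (n p : nat) (P : nat -> bool) (w : nat -> rat) : rat :=
  \sum_(t : n.-tuple 'I_p | incr_tuple t && P (fst_idx t))
     w (fst_idx t) / prod_idx t.

(* Main.v *)
Require Import Defs.
From mathcomp Require Import all_boot all_order all_algebra.
Import Order.TTheory GRing.Theory Num.Theory.
Local Open Scope ring_scope.
From mathcomp Require Import all_field.
From mathcomp Require Import ring lra zify.
Set Implicit Arguments. Unset Strict Implicit. Unset Printing Implicit Defensive.
Import Order.TTheory GRing.Theory Num.Theory.
Local Open Scope ring_scope.
Section Red.
Variable p : nat.
Hypothesis hp : prime p.

Lemma Fp_char : p \in [pchar 'F_p]. Proof. exact: pchar_Fp. Qed.

Lemma intF0 (z : int) : ((z%:~R : 'F_p) == 0) = (p%:Z %| z)%Z.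
Proof.
case: z => n.
  by rewrite -(dvdn_pcharf Fp_char).
by rewrite NegzE mulrNz oppr_eq0 -(dvdn_pcharf Fp_char) dvdzE abszN.
Qed.

Definition R (q : rat) (r : 'F_p) : Prop :=
  exists a b : int, ~~ (p%:Z %| b)%Z /\ q * b%:~R = a%:~R /\ r = a%:~R / b%:~R.

Lemma pdvdzM (a b : int) : ~~ (p%:Z %| a)%Z -> ~~ (p%:Z %| b)%Z -> ~~ (p%:Z %| a * b)%Z.
Proof. by rewrite -!intF0 rmorphM /= mulf_eq0 => /negPf -> /negPf ->. Qed.

Lemma R_int (z : int) : R z%:~R z%:~R.
Proof. exists z, 1; split; first by rewrite dvdzE /= dvdn1; case: (p) hp =>// [[]].
by split; rewrite ?mulr1 ?divr1. Qed.

Lemma R_nat (m : nat) : R m%:R m%:R.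
Proof. exact: (R_int m). Qed.

Lemma R_add {x y r s} : R x r -> R y s -> R (x + y) (r + s).
Proof.
move=> [a [b [hb [hx ->]]]] [c [d [hd [hy ->]]]].
exists (a * d + c * b), (b * d); split; first exact: pdvdzM.
have hb' : (b%:~R : 'F_p) != 0 by rewrite intF0.
have hd' : (d%:~R : 'F_p) != 0 by rewrite intF0.
split; last by rewrite !rmorphD !rmorphM /=; field; rewrite hb' hd'.
rewrite !rmorphD !rmorphM /= -hx -hy; ring.
Qed.

Lemma R_mul {x y r s} : R x r -> R y s -> R (x * y) (r * s).
Proof.
move=> [a [b [hb [hx ->]]]] [c [d [hd [hy ->]]]].
exists (a * c), (b * d); split; first exact: pdvdzM.
have hb' : (b%:~R : 'F_p) != 0 by rewrite intF0.
have hd' : (d%:~R : 'F_p) != 0 by rewrite intF0.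
split; last by rewrite !rmorphM /=; field; rewrite hb' hd'.
rewrite !rmorphM /= -hx -hy; ring.
Qed.

Lemma R_opp {x r} : R x r -> R (- x) (- r).
Proof.
move=> h; have := R_mul (R_int (-1)) h.
by rewrite !mulN1r.
Qed.

Lemma R_inv {x r} : R x r -> r != 0 -> R x^-1 r^-1.
Proof.
move=> [a [b [hb [hx ->]]]] hr.
have hb' : (b%:~R : 'F_p) != 0 by rewrite intF0.
have ha' : (a%:~R : 'F_p) != 0.
  by apply: contra hr => /eqP ->; rewrite mul0r.
have ha : a != 0 by apply: contra ha' => /eqP ->.
have hbq : (b%:~R : rat) != 0 by rewrite intr_eq0; apply: contra hb => /eqP ->; rewrite dvdz0.
exists b, a; split; first by rewrite -intF0.
split; last by rewrite invf_div.
have hxa : x = a%:~R / b%:~R by rewrite -hx mulfK.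
by rewrite hxa invf_div mulfVK // intr_eq0.
Qed.

Lemma R_sum (I : Type) (s : seq I) (P : pred I) (F : I -> rat) (G : I -> 'F_p) :
  (forall i, P i -> R (F i) (G i)) ->
  R (\sum_(i <- s | P i) F i) (\sum_(i <- s | P i) G i).
Proof.
move=> h; elim: s => [|i s ih]; first by rewrite !big_nil; exact: (R_nat 0).
rewrite !big_cons; case: ifP => // Pi; exact: R_add (h _ Pi) ih.
Qed.

Lemma R_prod (I : Type) (s : seq I) (P : pred I) (F : I -> rat) (G : I -> 'F_p) :
  (forall i, P i -> R (F i) (G i)) ->
  R (\prod_(i <- s | P i) F i) (\prod_(i <- s | P i) G i).
Proof.
move=> h; elim: s => [|i s ih]; first by rewrite !big_nil; exact: (R_nat 1).
rewrite !big_cons; case: ifP => // Pi; exact: R_mul (h _ Pi) ih.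
Qed.

Lemma R_cong0 q : R q 0 -> (p%:Z %| numq q)%Z.
Proof.
move=> [a [b [hb [hx h0]]]].
have hb' : (b%:~R : 'F_p) != 0 by rewrite intF0.
have ha : (p%:Z %| a)%Z.
  rewrite -intF0; move: h0 => /esym /eqP; rewrite mulf_eq0 invr_eq0 (negPf hb') orbF //.
have e : (numq q * b = a * denq q)%R.
  apply/eqP; rewrite -(eqr_int rat) !rmorphM /= -hx.
  have hq := divq_num_den q; have hD : (denq q)%:~R != 0 :> rat by rewrite intr_eq0 denq_neq0.
  move: hD hq; set N := numq q; set D := denq q => hD <-; apply/eqP; by field.
have : (p%:Z %| numq q * b)%Z by rewrite e dvdz_mulr.
rewrite -!intF0 rmorphM /= mulf_eq0 => /orP [] // /eqP hh.
by rewrite hh eqxx in hb'.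
Qed.
End Red.

Section Pow.
Variable p : nat.
Hypothesis hp : prime p.

Lemma natFp_inj (s t : nat) : (s < p)%N -> (t < p)%N -> (s%:R : 'F_p) = t%:R -> s = t.
Proof.
move=> hs ht e; have := congr1 (fun z : 'F_p => nat_of_ord z) e; rewrite /= !val_Fp_nat //.
by rewrite !modn_small.
Qed.

Lemma sum_Fp (G : 'F_p -> 'F_p) : \sum_(x : 'F_p) G x = \sum_(t < p) G (val t)%:R.
Proof.
have hinj : injective (fun t : 'I_p => ((val t)%:R : 'F_p)).
  move=> s t /= e; apply: val_inj. apply: natFp_inj; [exact: ltn_ord|exact: ltn_ord|exact e].
have hb : bijective (fun t : 'I_p => ((val t)%:R : 'F_p)).
  by apply: (inj_card_bij hinj); rewrite card_Fp // card_ord.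
by rewrite (reindex (fun t : 'I_p => ((val t)%:R : 'F_p))) //; apply: onW_bij.
Qed.

Lemma fermat (x : 'F_p) : x != 0 -> x ^+ p.-1 = 1.
Proof.
move=> hx; have := expf_card x; rewrite card_Fp // => ex.
by apply: (mulIf hx); rewrite -exprSr prednK ?prime_gt0 // ex mul1r.
Qed.

Lemma powsum0 (m : nat) : (0 < m)%N -> (m < p.-1)%N -> \sum_(x : 'F_p) x ^+ m = 0.
Proof.
move=> hm0 hm.
case: (boolP [exists c : 'F_p, (c != 0) && (c ^+ m != 1)]) => [/existsP [c /andP [hc hcm]] | hno].
  set S := \sum_(x : 'F_p) x ^+ m.
  have eS : S = c ^+ m * S.
    rewrite /S {1}(reindex_inj (mulfI hc)) /= mulr_sumr.
    by apply: eq_bigr => x _; rewrite exprMn.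
  have : (c ^+ m - 1) * S = 0 by rewrite mulrBl mul1r -eS subrr.
  by move/eqP; rewrite mulf_eq0 subr_eq0 (negPf hcm) /= => /eqP.
exfalso; move/existsPn: hno => hno.
set rs := enum [pred x : 'F_p | x != 0].
have hsz : size ('X^m - 1 : {poly 'F_p}) = m.+1 by rewrite size_Xn_sub_1.
have hne : ('X^m - 1 : {poly 'F_p}) != 0 by rewrite -size_poly_eq0 hsz.
have hroots : all (root ('X^m - 1)) rs.
  apply/allP => x; rewrite mem_enum inE => hx.
  have := hno x; rewrite hx /= negbK => /eqP hxm.
  by rewrite rootE !hornerE hxm subrr.
have := max_poly_roots hne hroots (enum_uniq _).
rewrite hsz -cardE cardC1 card_Fp // ltnS => h.
by have := leq_ltn_trans h hm; rewrite ltnn.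
Qed.

Lemma powsum (e : nat) : (0 < e)%N -> (e < 2 * p.-1)%N ->
  \sum_(x : 'F_p) x ^+ e = if e == p.-1 then -1 else 0.
Proof.
move=> he0 he1.
have hp2 := prime_gt1 hp.
case: ifP => [/eqP -> | hne].
  rewrite (bigD1 0) //= expr0n /=.
  have -> : (p.-1 == 0%N) = false by apply/eqP; lia.
  rewrite add0r (eq_bigr (fun _ => 1)); last by move=> x hx; exact: fermat.
  rewrite sumr_const cardC1 card_Fp //.
  have hp1 : (p.-1.+1 = p)%N by rewrite prednK // prime_gt0.
  by apply/eqP; rewrite -addr_eq0 natr1 hp1 pchar_Fp_0.
case: (ltnP e p.-1) => hlt; first exact: powsum0.
have hlt2 : (p.-1 < e)%N by rewrite ltn_neqAle eq_sym hne hlt.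
transitivity (\sum_(x : 'F_p) x ^+ (e - p.-1)); last by apply: powsum0; lia.
apply: eq_bigr => x _.
case: (eqVneq x 0) => [-> | hx].
  rewrite !expr0n; have -> : (e == 0%N) = false by apply/eqP; lia.
  by have -> : ((e - p.-1)%N == 0%N) = false by apply/eqP; lia.
by rewrite -{1}(subnK (ltnW hlt2)) exprD fermat // mulr1.
Qed.
End Pow.

Section Sets.
Variable p : nat.
Hypothesis hp : prime p.

Definition mn (A : {set 'I_p}) : nat := nth 0%N (map val (enum A)) 0.
Definition posA (A : {set 'I_p}) : bool := all (fun i : 'I_p => (0 < val i)%N) (enum A).

Lemma sorted_enumA (A : {set 'I_p}) : sorted (fun i j : 'I_p => (i < j)%N) (enum A).
Proof.
have e : enum A = filter (mem A) (enum 'I_p).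
  by rewrite /enum_mem -enumT /= filter_predT.
have : sorted (fun i j : 'I_p => (i < j)%N) (enum 'I_p).
  by have := iota_ltn_sorted 0 p; rewrite -val_enum_ord sorted_map.
rewrite e; apply: sorted_filter => x y z; exact: ltn_trans.
Qed.

Lemma enum_set_sorted (s : seq 'I_p) : sorted (fun i j : 'I_p => (i < j)%N) s ->
  enum [set x in s] = s.
Proof.
move=> hs; apply: (@irr_sorted_eq _ (fun i j : 'I_p => (i < j)%N)).
- by move=> x y z; exact: ltn_trans.
- by move=> x; rewrite ltnn.
- exact: sorted_enumA.
- exact: hs.
- by move=> x; rewrite mem_enum inE.
Qed.

Variable n : nat.

Lemma B1 (g : nat -> 'F_p) :
  \sum_(t : n.-tuple 'I_p | incr_tuple t) g (fst_idx t) / \prod_(i <- t) ((val i)%:R : 'F_p)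
  = \sum_(A : {set 'I_p} | (#|A| == n) && posA A) g (mn A) / \prod_(i <- enum A) ((val i)%:R : 'F_p).
Proof.
have x0 : 'I_p := Ordinal (prime_gt0 hp).
pose d := [tuple of nseq n x0].
pose tup (A : {set 'I_p}) : n.-tuple 'I_p := insubd d (enum A).
have vtup (A : {set 'I_p}) : #|A| = n -> tval (tup A) = enum A.
  by move=> hA; rewrite /tup (val_insubd d (enum A)) -cardE hA eqxx.
symmetry.
rewrite (reindex_onto (fun t : n.-tuple 'I_p => [set x in t]) tup); last first.
  move=> A /andP [/eqP hA _]; apply/setP => x.
  by rewrite inE -[x \in tup A]/(x \in tval (tup A)) vtup // mem_enum.
apply: eq_big => t.
  apply/idP/idP.
    move=> /andP [/andP [/eqP hc hpos] /eqP ht].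
    have e : tval t = enum [set x in t] by rewrite -{1}ht vtup.
    rewrite /incr_tuple e sorted_map.
    by apply/andP; split; [exact: sorted_enumA | exact: hpos].
  move=> /andP [hs hpos].
  have hs' : sorted (fun i j : 'I_p => (i < j)%N) t by move: hs; rewrite sorted_map.
  have e := enum_set_sorted hs'.
  have hc : #|[set x in t]| = n by rewrite cardE e size_tuple.
  rewrite hc eqxx /posA e hpos /=.
  apply/eqP/val_inj; change (tval (tup [set x in t]) = tval t); by rewrite vtup // e.
move=> /andP [/andP [/eqP hc _] /eqP ht].
have e : tval t = enum [set x in t] by rewrite -{1}ht vtup.
by rewrite /mn /fst_idx -e.
Qed.

Lemma posAP (A : {set 'I_p}) : reflect (forall j, j \in A -> (0 < val j)%N) (posA A).
Proof.
apply: (iffP allP) => h j hj; apply: h; by rewrite ?mem_enum // -mem_enum.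
Qed.

Lemma mn_spec (A : {set 'I_p}) : A != set0 ->
  exists2 i, i \in A & (val i = mn A /\ forall j, j \in A -> (mn A <= val j)%N).
Proof.
move=> hA; have hs := sorted_enumA A.
case e: (enum A) hs => [|i s] hs.
  by move: hA; rewrite -card_gt0 cardE e.
exists i; first by rewrite -mem_enum e mem_head.
rewrite /mn e /=; split => // j; rewrite -mem_enum e inE => /orP [/eqP -> // | hj].
have tr : transitive (fun i j : 'I_p => (i < j)%N) by move=> x y z; exact: ltn_trans.
have := order_path_min tr hs.
by move/allP => /(_ j hj) /ltnW.
Qed.

Definition Dset (m : nat) : {set 'I_p} := [set i : 'I_p | (m <= val i)%N].

Lemma cond_iff (A : {set 'I_p}) (a : 'I_p) :
  ((0 < val a)%N && ((A \subset Dset (val a)) && (a \in A))) =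
  (posA A && (A != set0) && (val a == mn A)).
Proof.
apply/idP/idP.
  move=> /andP [ha0 /andP [/subsetP hs haA]].
  have hA : A != set0 by apply/set0Pn; exists a.
  have [i hi [ei hmin]] := mn_spec hA.
  rewrite hA andbT; apply/andP; split.
    apply/posAP => j hj; have := hs j hj; rewrite inE => h; exact: leq_trans ha0 h.
  rewrite eqn_leq hmin // andbT -ei.
  by have := hs i hi; rewrite inE.
move=> /andP [/andP [/posAP hpos hA] /eqP ea].
have [i hi [ei hmin]] := mn_spec hA.
have eai : a = i by apply: val_inj; rewrite ea ei.
rewrite eai (hpos i hi) hi andbT /=.
by apply/subsetP => j hj; rewrite inE ei hmin.
Qed.

Lemma group (G : {set 'I_p} -> nat -> 'F_p) :
  \sum_(A : {set 'I_p} | posA A && (A != set0)) G A (mn A) =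
  \sum_(a : 'I_p | (0 < val a)%N) \sum_(A : {set 'I_p} | (A \subset Dset (val a)) && (a \in A)) G A (val a).
Proof.
under [RHS]eq_bigr => a _ do rewrite big_mkcond.
rewrite exchange_big /= [LHS]big_mkcond /=.
apply: eq_bigr => A _.
rewrite -big_mkcondr /=.
under eq_bigl => a do rewrite cond_iff.
case: ifP => hA.
  have hA0 : A != set0 by case/andP: hA.
  have [i hi [ei hmin]] := mn_spec hA0.
  rewrite (big_pred1 i) ?ei // => a /=.
  rewrite -ei; apply/eqP/eqP => [h|-> //]; exact: val_inj.
by rewrite big_pred0.
Qed.

Lemma subexp (D : {set 'I_p}) (g : 'I_p -> 'F_p) :
  \prod_(i in D) (1 + g i) = \sum_(A : {set 'I_p} | A \subset D) \prod_(i in A) g i.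
Proof.
have := @bigA_distr _ 0 1 *%R +%R 'I_p (fun i => if i \in D then g i else 0) (fun _ => 1).
move=> h.
transitivity (\prod_i ((if i \in D then g i else 0) + 1)).
  rewrite [LHS]big_mkcond; apply: eq_bigr => i _; case: ifP => _; [exact: addrC | by rewrite add0r].
rewrite h [RHS]big_mkcond; apply: eq_bigr => A _.
case: ifP => hAD.
  rewrite [RHS]big_mkcond; apply: eq_bigr => i _.
  case: ifP => // hi; by rewrite (subsetP hAD _ hi).
move/negbT: hAD => /subsetPn [i hiA hiD].
rewrite (bigD1 i) //= hiA (negPf hiD) mul0r //.
Qed.

Lemma card_lt_p (A : {set 'I_p}) : posA A -> (#|A| < p)%N.
Proof.
move=> /posAP hpos.
have hpr : A \proper [set: 'I_p].
  rewrite properT; apply/negP => /eqP hT.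
  have h0 : Ordinal (prime_gt0 hp) \in A by rewrite hT inE.
  by have := hpos _ h0.
by have := proper_card hpr; rewrite cardsT card_ord.
Qed.

End Sets.

Section Main.
Variable p : nat.
Hypothesis hp : prime p.

Definition U (x : 'F_p) (m : nat) : 'F_p := \prod_(m <= j < p) (1 + x / j%:R).

Lemma Uset (x : 'F_p) m : \prod_(i in Dset p m) (1 + x / (val i)%:R) = U x m.
Proof. by rewrite /U big_geq_mkord; apply: eq_bigl => i; rewrite inE. Qed.

Lemma sub_min (x : 'F_p) (a : 'I_p) :
  \sum_(A : {set 'I_p} | (A \subset Dset p a) && (a \in A)) \prod_(i in A) (x / (val i)%:R)
  = U x a - U x a.+1.
Proof.
rewrite -!Uset !subexp.
rewrite (bigID (fun A : {set 'I_p} => a \in A) (fun A : {set 'I_p} => A \subset Dset p a)) /=.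
rewrite [X in (_ + X) - _](eq_bigl (fun A : {set 'I_p} => A \subset Dset p a.+1)) ?addrK // => A.
apply/idP/idP.
  move=> /andP [/subsetP h ha]; apply/subsetP => j hj.
  have := h j hj; rewrite !inE => hle; rewrite ltn_neqAle hle andbT.
  apply: contraNneq ha => e; have -> : a = j by apply: val_inj.
  exact: hj.
move=> /subsetP h; apply/andP; split.
  by apply/subsetP => j hj; have := h j hj; rewrite !inE => /ltnW.
by apply/negP => ha; have := h a ha; rewrite inE ltnn.
Qed.

Lemma natFp_neq0 (m : nat) : (0 < m)%N -> (m < p)%N -> (m%:R : 'F_p) != 0.
Proof.
move=> h0 h1; rewrite -(dvdn_pcharf (pchar_Fp hp)).
by apply/negP => /(dvdn_leq h0); rewrite leqNgt h1.
Qed.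

Lemma Uform (t b : nat) : (0 < t)%N -> (t < p)%N -> (b < p)%N ->
  U t%:R (p - b) = (-1) ^+ b * ('C(t.-1, b))%:R.
Proof.
move=> ht0 htp; elim: b => [|b ih] hb.
  by rewrite subn0 /U big_geq // mul1r bin0.
have hb' : (b < p)%N by apply: ltnW.
rewrite /U big_ltn; last by lia.
rewrite subnSK // -/(U _ _) ih //.
have hB := natFp_neq0 (ltn0Sn b) hb.
have eP : ((p - b.+1)%:R : 'F_p) = - (b.+1)%:R.
  by rewrite natrB ?(ltnW hb) // pchar_Fp_0 // sub0r.
have hbin : (b.+1)%:R * ('C(t.-1, b.+1))%:R = ((t%:R : 'F_p) - (b.+1)%:R) * ('C(t.-1, b))%:R.
  rewrite -natrM mul_bin_left natrM.
  case: (leqP b t.-1) => hbt.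
    by rewrite natrB // -natr1 -[in RHS](prednK ht0) -natr1; congr (_ * _); ring.
  by rewrite bin_small // !mulr0.
have eC : ('C(t.-1, b.+1))%:R = ((t%:R : 'F_p) - (b.+1)%:R) * ('C(t.-1, b))%:R / (b.+1)%:R.
  by rewrite -hbin mulrC mulKf.
rewrite eP eC exprS; field; move: hB; rewrite -natr1 addrC => hB; by rewrite oppr_eq0 hB.
Qed.

Lemma per_a (t : nat) (a : 'I_p) : (0 < t)%N -> (t < p)%N -> (0 < val a)%N ->
  U t%:R a - U t%:R a.+1 = (-1) ^+ (p - a) * ('C(t, p - a))%:R.
Proof.
move=> ht0 htp ha.
have ha' := ltn_ord a.
have ha2 : (0 < (a : nat))%N := ha.
have e1 : (a : nat) = (p - (p - a))%N by lia.
have e2 : (a : nat).+1 = (p - (p - a - 1))%N by lia.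
rewrite e2 [X in U _ X - _]e1 !Uform //; try lia.
have hb : (0 < p - a)%N by rewrite subn_gt0.
move: hb; case: (p - a)%N => // c _; rewrite subn1 /=.
rewrite -{3}(prednK ht0) binS exprS natrD; ring.
Qed.
Variable n : nat.
Hypothesis hn : (0 < n)%N.
Hypothesis hnp : (n.+1 < p)%N.

Lemma B2 (A : {set 'I_p}) : posA A -> A != set0 ->
  - (\sum_(x : 'F_p) x ^+ (p.-1 - n) * x ^+ #|A|) = (#|A| == n)%:R.
Proof.
move=> hpos hA.
have hc := card_lt_p hp hpos.
have hc0 : (0 < #|A|)%N by rewrite card_gt0.
have hpp : p.-1 = (p - 1)%N by rewrite subn1.
under eq_bigr do rewrite -exprD.
rewrite powsum //; rewrite ?hpp; [| lia | lia].
have -> : ((p - 1 - n + #|A|)%N == (p - 1)%N) = (#|A| == n) by apply/eqP/eqP; lia.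
by case: eqP => _; rewrite ?opprK ?oppr0.
Qed.

Lemma mainF (g : nat -> 'F_p) :
  \sum_(A : {set 'I_p} | (#|A| == n) && posA A) g (mn A) / \prod_(i <- enum A) ((val i)%:R : 'F_p)
  = - \sum_(t < p) ((val t)%:R : 'F_p) ^+ (p.-1 - n) *
        \sum_(a : 'I_p | (0 < val a)%N) g a * ((-1) ^+ (p - a) * ('C(t, p - a))%:R).
Proof.
set k := (p.-1 - n)%N.
pose T (A : {set 'I_p}) := g (mn A) * \prod_(i in A) ((val i)%:R : 'F_p)^-1.
transitivity (\sum_(A : {set 'I_p} | posA A && (A != set0))
                 (- \sum_(x : 'F_p) x ^+ k * x ^+ #|A|) * T A).
  rewrite big_mkcond [RHS]big_mkcond; apply: eq_bigr => A _.
  case hpos: (posA A); rewrite ?andbF ?andbT //=.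
  case hA: (A != set0).
    rewrite B2 //; case: eqP => hc /=; last by rewrite mul0r.
    by rewrite mul1r /T big_enum prodfV.
  move/negbFE: hA => /eqP ->; rewrite cards0.
  by have -> : (0 == n)%N = false by apply/eqP; lia.
transitivity (- \sum_(x : 'F_p) x ^+ k *
   \sum_(A : {set 'I_p} | posA A && (A != set0)) g (mn A) * \prod_(i in A) (x / (val i)%:R)).
  under eq_bigr do rewrite mulNr mulr_suml -sumrN.
  rewrite exchange_big /= -sumrN; apply: eq_bigr => x _.
  rewrite mulr_sumr -sumrN; apply: eq_bigr => A _.
  rewrite /T big_split /= prodr_const; congr (- _); ring.
rewrite (sum_Fp hp); congr (- _); apply: eq_bigr => t _.
have hk : (0 < k)%N by rewrite /k -subn1; lia.
case: (posnP t) => [t0 | tpos].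
  have -> : ((val t)%:R : 'F_p) = 0 by rewrite -[val t]/(nat_of_ord t) t0.
  by rewrite expr0n (negPf (lt0n_neq0 hk)) !mul0r.
congr (_ * _).
rewrite (group (fun A m => g m * \prod_(i in A) (((val t)%:R : 'F_p) / (val i)%:R))).
apply: eq_bigr => a ha; rewrite -mulr_sumr sub_min per_a //; exact: ltn_ord.
Qed.
End Main.

Section Per.
Variable c : nat -> int.
Variable q : nat.

Definition hh (b : nat) : int := c ((q + 6 - b %% 6) %% 6) * (-1) ^+ b.
Definition Gr (r t : nat) : int := \sum_(b < t.+1) hh (b + r) * ('C(t, b))%:R.

Lemma sign_mod6 (b : nat) : (-1) ^+ b = (-1) ^+ (b %% 6) :> int.
Proof.
rewrite {1}(divn_eq b 6) exprD mulnC exprM.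
have -> : (-1) ^+ 6 = 1 :> int by [].
by rewrite expr1n mul1r.
Qed.

Lemma hh_mod (b : nat) : hh b = hh (b %% 6).
Proof. by rewrite /hh modn_mod -sign_mod6. Qed.

Lemma Gr_mod (r t : nat) : Gr r t = Gr (r %% 6) t.
Proof.
apply: eq_bigr => b _; congr (_ * _).
by rewrite hh_mod [in RHS]hh_mod modnDmr.
Qed.

Lemma Gr_S (r t : nat) : Gr r t.+1 = Gr r t + Gr r.+1 t.
Proof.
rewrite /Gr big_ord_recl /=.
rewrite [in X in _ = X + _]big_ord_recl /=.
have e : \sum_(b < t.+1) hh (bump 0 b + r) * ('C(t.+1, bump 0 b))%:R
   = \sum_(b < t.+1) hh (b + r.+1) * ('C(t, b.+1))%:R + \sum_(b < t.+1) hh (b + r.+1) * ('C(t, b))%:R.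
  rewrite -big_split /=; apply: eq_bigr => b _.
  by rewrite /bump /= add1n addSnnS binS natrD mulrDr.
rewrite e big_ord_recr /= (bin_small (ltnSn t)) mulr0 addr0 !bin0 addrA; congr (_ + _ + _).
by apply: eq_bigr => b _; rewrite /bump /= add1n addSnnS.
Qed.

Lemma Gr_per :
  (forall r, (r < 6)%N -> Gr r 6 + Gr r.+1 6 = Gr r 1) ->
  forall t r, Gr r t.+1 = Gr r (t %% 6).+1.
Proof.
move=> check; elim=> [|t ih] r; first by [].
rewrite Gr_S !ih.
have h6 : (t %% 6 < 6)%N by rewrite ltn_mod.
case: (ltnP (t %% 6) 5) => ht.
  have -> : ((t.+1) %% 6 = (t %% 6).+1)%N by lia.
  by rewrite [RHS]Gr_S.
have e5 : (t %% 6 = 5)%N by lia.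
have -> : ((t.+1) %% 6 = 0)%N by lia.
rewrite e5 (Gr_mod r) (Gr_mod r.+1) [in RHS](Gr_mod r).
have -> : (r.+1 %% 6 = (r %% 6).+1 %% 6)%N by lia.
rewrite -(Gr_mod (r %% 6).+1).
apply: check; by rewrite ltn_mod.
Qed.
End Per.

Definition c1 (r : nat) : int :=
  if (r == 1%N) || (r == 2%N) then 1 else if (r == 4%N) || (r == 5%N) then -1 else 0.
Definition c2 (r : nat) : int :=
  if r == 0%N then 1 else if r == 3%N then -3 else if (r == 2%N) || (r == 4%N) then -2 else 0.

Lemma check1 (c : nat -> int) (q : nat) : (c = c1 \/ c = c2) -> (q < 6)%N -> odd q ->
  forall r, (r < 6)%N -> Gr c q r 6 + Gr c q r.+1 6 = Gr c q r 1.
Proof.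
move=> hc hq hodd r hr.
case: hc => ->; case: q hq hodd => [|[|[|[|[|[|q]]]]]] //= _ _;
  case: r hr => [|[|[|[|[|[|r]]]]]] //= _; rewrite /Gr !big_ord_recr !big_ord0; vm_compute; reflexivity.
Qed.

Lemma check2 (c : nat -> int) (s : int) (q : nat) : ((c = c1 /\ s = -1) \/ (c = c2 /\ s = 1)) ->
  (q < 6)%N -> odd q ->
  forall u, (u < 6)%N -> Gr c q 0 u.+1 + s * Gr c q 0 ((q + 10 - u) %% 6).+1 = 0.
Proof.
move=> hc hq hodd u hu.
case: hc => [[-> ->]|[-> ->]]; case: q hq hodd => [|[|[|[|[|[|q]]]]]] //= _ _;
  case: u hu => [|[|[|[|[|[|u]]]]]] //= _; rewrite /Gr !big_ord_recr !big_ord0; vm_compute; reflexivity.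
Qed.

Lemma modx1 (p t : nat) : (0 < t)%N -> (t < p)%N -> ((p - t - 1) %% 6 = (p %% 6 + 10 - (t - 1) %% 6) %% 6)%N.
Proof. move=> *; lia. Qed.
Lemma modx2 (p t : nat) : (0 < t)%N -> (t < p)%N -> (p - t = (p - t - 1).+1)%N.
Proof. move=> *; lia. Qed.
Lemma modx3 (t : nat) : (0 < t)%N -> t = (t - 1).+1.
Proof. move=> *; lia. Qed.

Lemma Gsym (c : nat -> int) (s : int) (p t : nat) :
  ((c = c1 /\ s = -1) \/ (c = c2 /\ s = 1)) -> odd p ->
  (0 < t)%N -> (t < p)%N ->
  Gr c (p %% 6) 0 t + s * Gr c (p %% 6) 0 (p - t) = 0.
Proof.
move=> hc hodd ht0 htp.
have hq : (p %% 6 < 6)%N by rewrite ltn_mod.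
have hoq : odd (p %% 6) by rewrite odd_mod.
have hc1 : c = c1 \/ c = c2 by case: hc => [[-> _]|[-> _]]; [left|right].
have per := Gr_per (check1 hc1 hq hoq).
rewrite (modx2 ht0 htp) {1}(modx3 ht0) (per (t - 1)%N) (per (p - t - 1)%N) (modx1 ht0 htp).
apply: check2 => //; by rewrite ltn_mod.
Qed.


Lemma Gint_eq (c : nat -> int) (p t : nat) : (t < p)%N ->
  \sum_(a : 'I_p | (0 < val a)%N) c (a %% 6)%N * ((-1) ^+ (p - a) * ('C(t, p - a))%:R)
  = Gr c (p %% 6)%N 0 t - c (p %% 6)%N.
Proof.
move=> htp.
have e1 : \sum_(1 <= a < p) c (a %% 6)%N * ((-1) ^+ (p - a) * ('C(t, p - a))%:R)
   = \sum_(a : 'I_p | (0 < val a)%N) c (a %% 6)%N * ((-1) ^+ (p - a) * ('C(t, p - a))%:R).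
  by rewrite big_geq_mkord.
rewrite -e1 big_nat_rev /=.
have e2 : Gr c (p %% 6)%N 0 t = \sum_(0 <= b < p) hh c (p %% 6)%N b * ('C(t, b))%:R.
  rewrite /Gr (big_ord_widen p (fun b => hh c (p %% 6)%N (b + 0) * ('C(t, b))%:R) htp).
  rewrite big_mkcond big_mkord; apply: eq_bigr => b _.
  by case: ifP => hb; rewrite ?addn0 // bin_small ?mulr0 // ltnNge -ltnS hb.
rewrite e2 [X in _ = X - _]big_ltn; last by lia.
rewrite {1}/hh bin0 mulr1.
have -> : ((p %% 6 + 6 - 0 %% 6) %% 6 = p %% 6)%N by lia.
rewrite expr0 mulr1 addrAC subrr add0r.
apply: eq_big_nat => i /andP [hi1 hi2].
have e3 : (1 + p - i.+1 = p - i)%N by lia.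
have e4 : (p - (p - i) = i)%N by lia.
have e5 : ((p - i) %% 6 = (p %% 6 + 6 - i %% 6) %% 6)%N by lia.
by rewrite e3 e4 e5 /hh mulrA.
Qed.

Section Fin.
Variable p : nat.
Hypothesis hp : prime p.
Variable n : nat.
Hypothesis hn : (0 < n)%N.
Hypothesis hnp : (n.+1 < p)%N.

Lemma int_sum_cast (c : nat -> int) (t : nat) :
  \sum_(a : 'I_p | (0 < val a)%N) ((c (a %% 6)%N)%:~R : 'F_p) * ((-1) ^+ (p - a) * ('C(t, p - a))%:R)
  = ((\sum_(a : 'I_p | (0 < val a)%N) c (a %% 6)%N * ((-1) ^+ (p - a) * ('C(t, p - a))%:R)) : int)%:~R.
Proof.
rewrite rmorph_sum; apply: eq_bigr => a _.
by rewrite !rmorphM /= rmorphXn /= rmorphN1 rmorph_nat.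
Qed.

Lemma finalF (c : nat -> int) (s : int) :
  ((c = c1 /\ s = -1 /\ odd n) \/ (c = c2 /\ s = 1 /\ ~~ odd n)) ->
  \sum_(t : n.-tuple 'I_p | incr_tuple t) ((c (fst_idx t %% 6)%N)%:~R : 'F_p) / \prod_(i <- t) ((val i)%:R : 'F_p) = 0.
Proof.
move=> hcs.
have hc : (c = c1 /\ s = -1) \/ (c = c2 /\ s = 1) by case: hcs => [[-> [-> _]]|[-> [-> _]]]; [left|right].
have hp2 : (2 < p)%N by lia.
have hodd : odd p by apply/negPn/negP => /(prime_oddPn hp) e; rewrite e in hp2.
rewrite (B1 hp n (fun i => ((c (i %% 6)%N)%:~R : 'F_p))) (mainF hp hn hnp (fun i => ((c (i %% 6)%N)%:~R : 'F_p))).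
set k := (p.-1 - n)%N.
have hk0 : (0 < k)%N by rewrite /k -subn1; lia.
have hk1 : (k < p.-1)%N by rewrite /k -subn1; lia.
under eq_bigr => t _ do rewrite int_sum_cast (Gint_eq c (ltn_ord t)).
set q := (p %% 6)%N.
under eq_bigr => t _ do rewrite rmorphB /= mulrBr.
rewrite sumrB -mulr_suml.
have -> : \sum_(t < p) ((val t)%:R : 'F_p) ^+ k = 0 by rewrite -(sum_Fp hp (fun x => x ^+ k)) powsum0.
rewrite mul0r subr0; apply/eqP; rewrite oppr_eq0; apply/eqP.
set F := fun t : nat => ((t%:R : 'F_p) ^+ k * (Gr c q 0 t)%:~R).
have -> : \sum_(t < p) ((val t)%:R : 'F_p) ^+ k * (Gr c q 0 t)%:~R = \sum_(0 <= t < p) F t by rewrite big_mkord.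
rewrite big_ltn ?prime_gt0 //.
have -> : F 0%N = 0 by rewrite /F expr0n (negPf (lt0n_neq0 hk0)) mul0r.
rewrite add0r.
set Y := \sum_(1 <= t < p) F t.
have hY : Y = - Y.
  rewrite {1}/Y big_nat_rev /= -sumrN; apply: eq_big_nat => t /andP [ht1 htp].
  have e3 : (1 + p - t.+1 = p - t)%N by lia.
  rewrite e3 /F.
  have eP : ((p - t)%:R : 'F_p) = - t%:R by rewrite natrB ?(ltnW htp) // pchar_Fp_0 // sub0r.
  have hG := Gsym hc hodd ht1 htp.
  have eG : Gr c q 0 (p - t) = - s * Gr c q 0 t.
    have hs2 : s * s = 1 by case: hc => [[_ ->]|[_ ->]].
    have e : s * Gr c q 0 (p - t) = - Gr c q 0 t by apply/eqP; rewrite -addr_eq0 addrC hG.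
    by rewrite -[LHS]mul1r -hs2 -mulrA e mulrN mulNr.
  rewrite eP eG exprNn.
  have esk : ((-1) ^+ k * (- s)%:~R : 'F_p) = -1.
    have hok : odd k = odd n.
      rewrite /k oddB; last by lia.
      have hop : odd p.-1 = false by apply/negbTE; rewrite -oddS prednK ?prime_gt0.
      by rewrite hop.
    by case: hcs => [[_ [-> hn']]|[_ [-> hn']]]; rewrite -signr_odd hok ?hn' /= ?(negPf hn') /= ?opprK; rewrite ?rmorph1 ?rmorphN ?rmorph1 ?opprK ?mulN1r ?mul1r.
  rewrite rmorphM /=.
  transitivity (((-1) ^+ k * (- s)%:~R) * (t%:R ^+ k * (Gr c q 0 t)%:~R) : 'F_p); first ring.
  by rewrite esk mulN1r.
have h2 : (2%:R : 'F_p) * Y = 0 by rewrite mulr2n mulrDl mul1r {2}hY subrr.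
by move/eqP: h2; rewrite mulf_eq0 (negPf (natFp_neq0 hp (isT : (0 < 2)%N) hp2)) /= => /eqP.
Qed.

Lemma R_one : R (p:=p) 1 1.
Proof.
exists 1, 1; split; first by rewrite dvdzE /= dvdn1; case: (p) hp => // [[]].
by split; rewrite ?mulr1 ?divr1.
Qed.

Lemma R_mhsum (P : nat -> bool) (w : nat -> rat) (wF : nat -> 'F_p) :
  (forall i, R (w i) (wF i)) ->
  R (mhsum n p P w) (\sum_(t : n.-tuple 'I_p | incr_tuple t && P (fst_idx t))
                        wF (fst_idx t) / \prod_(i <- t) ((val i)%:R : 'F_p)).
Proof.
move=> hw; rewrite /mhsum; apply: (R_sum hp) => t /andP [hinc _].
apply: (R_mul hp (hw _)); apply: (R_inv hp).
  by rewrite /prod_idx; apply: (R_prod hp) => i _; exact: R_nat.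
rewrite prodf_seq_neq0; apply/allP => i hi /=.
case/andP: hinc => _ /allP /(_ i hi) hi0.
by have := natFp_neq0 hp hi0 (ltn_ord i).
Qed.
End Fin.


Unset Implicit Arguments.

Theorem theorem1p1 (n p : nat) (hn : (0 < n)%N) (hp : prime p) (hpn : (n.+1 < p)%N) :
  (odd n ->
    ratcong p
      (mhsum n p (fun i => (i %% 6 == 1) || (i %% 6 == 2))%N (fun _ => 1))
      (mhsum n p (fun i => (i %% 6 == 4) || (i %% 6 == 5))%N (fun _ => 1)))
  /\
  (~~ odd n ->
    ratcong p
      (mhsum n p (fun i => i %% 3 == 0)%N (fun i => (-1) ^+ i))
      (2 * mhsum n p (fun i => [|| i %% 6 == 2, i %% 6 == 3 | i %% 6 == 4])%N
                     (fun _ => 1))).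
Proof.
have hone : forall i : nat, R (p:=p) ((fun _ => 1) i) ((fun _ => 1) i) by move=> i; exact: R_one hp.
split.
- move=> hodd; rewrite /ratcong; apply: (R_cong0 hp).
  have h1 := R_mhsum hp n (fun i => (i %% 6 == 1) || (i %% 6 == 2))%N hone.
  have h2 := R_mhsum hp n (fun i => (i %% 6 == 4) || (i %% 6 == 5))%N hone.
  have := R_add hp h1 (R_opp hp h2).
  suff -> : (\sum_(t : n.-tuple 'I_p | incr_tuple t && (fun i => (i %% 6 == 1) || (i %% 6 == 2))%N (fst_idx t))
              (fun _ => 1) (fst_idx t) / \prod_(i <- t) ((val i)%:R : 'F_p))
           + - (\sum_(t : n.-tuple 'I_p | incr_tuple t && (fun i => (i %% 6 == 4) || (i %% 6 == 5))%N (fst_idx t))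
              (fun _ => 1) (fst_idx t) / \prod_(i <- t) ((val i)%:R : 'F_p)) = 0 by [].
  rewrite -[RHS](finalF hp hn hpn (c := c1) (s := -1)); last by left.
  rewrite [X in X - _]big_mkcondr [X in _ - X]big_mkcondr -sumrB; apply: eq_bigr => t _ /=.
  move: (ltn_mod (fst_idx t) 6); case: (fst_idx t %% 6)%N => [|[|[|[|[|[|r]]]]]] //= _;
    rewrite /c1 /=; ring.
- move=> hev; rewrite /ratcong; apply: (R_cong0 hp).
  have hsign : forall i : nat, R (p:=p) ((fun i => (-1) ^+ i) i) ((fun i => (-1) ^+ i) i).
    move=> i; have := R_int hp ((-1) ^+ i); by rewrite !rmorphXn /= !rmorphN1.
  have h1 := R_mhsum hp n (fun i => i %% 3 == 0)%N hsign.
  have h2 := R_mhsum hp n (fun i => [|| i %% 6 == 2, i %% 6 == 3 | i %% 6 == 4])%N hone.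
  have := R_add hp h1 (R_opp hp (R_mul hp (R_nat hp 2) h2)).
  set S1 := \sum_(t : n.-tuple 'I_p | _) _.
  set S2 := \sum_(t : n.-tuple 'I_p | _) _.
  suff -> : S1 + - (2%:R * S2) = 0 by [].
  rewrite -[RHS](finalF hp hn hpn (c := c2) (s := 1)); last by right.
  rewrite /S1 /S2 [X in X - _]big_mkcondr [X in _ - (_ * X)]big_mkcondr mulr_sumr -sumrB.
  apply: eq_bigr => t _ /=.
  rewrite -signr_odd -(odd_mod (fst_idx t) (erefl : odd 6 = false)).
  rewrite -(modn_dvdm (fst_idx t) (isT : (3 %| 6)%N)).
  move: (ltn_mod (fst_idx t) 6); case: (fst_idx t %% 6)%N => [|[|[|[|[|[|r]]]]]] //= _;
    rewrite /c2 /=; ring.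
Qed.
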